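(* Let $X$ be uniformly distributed on $[-\pi,\pi]$. Set $\varphi_0\equiv 1$, $\varphi_{2k}(x)=\sqrt{2}\cos(kx)$ and $\varphi_{2k+1}(x)=\sqrt{2}\sin(kx)$ for $k\geq 1$, and for $l\in\mathbb{N}$ let $m_D=\mathrm{Span}\{\varphi_j : j=0,\dots,2l\}$, of linear dimension $D=2l+1$. If $m_D$ satisfies the small-ball condition with constants $(\beta_0,\kappa_0)$, i.e. $\mathbb{P}(|s(X)|\geq\kappa_0\|s\|_2)\geq\beta_0$ for every $s\in m_D$ (with $\kappa_0,\beta_0>0$), then \[ \beta_0\leq C\,\kappa_0^{-1/2}D^{-3/4} \] for some absolute constant $C>0$ (the paper states that $C=3^{1/4}\sqrt{2}$ works).
   Context: $\|\cdot\|_2$ denotes the norm of $L_2(P^X)$, $P^X$ being the uniform distribution on $[-\pi,\pi]$. *)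

(* Defs.v *)
From HB Require Import structures.
From mathcomp Require Import all_boot all_order all_algebra.
From mathcomp Require Import all_classical all_reals all_analysis.
Set Implicit Arguments. Unset Strict Implicit. Unset Printing Implicit Defensive.
Import Order.TTheory GRing.Theory Num.Theory.
Local Open Scope classical_set_scope.
Local Open Scope ring_scope.

Lemma Npi_lt_pi (R : realType) : - pi < pi :> R.
Proof. by rewrite gtrN // pi_gt0. Qed.

Definition PX (R : realType) := uniform_prob (Npi_lt_pi R).
Arguments PX : clear implicits.

Definition phi (R : realType) (j : nat) (x : R) : R :=
  if j == 0%N then 1
  else if ~~ odd j then Num.sqrt 2 * cos ((j./2)%:R * x)
  else Num.sqrt 2 * sin ((j./2)%:R * x).

(* general element of m_D = Span{phi_0, 1 <= k <= l : cos (k x), sin (k x)},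
   given by its coefficients a0, b_k (cosine), c_k (sine), 1 <= k <= l *)
Definition trig_elem (R : realType) (l : nat) (a0 : R) (b c : nat -> R) (x : R) : R :=
  a0 * phi 0 x + \sum_(1 <= k < l.+1) (b k * phi (2 * k) x + c k * phi (2 * k + 1) x).

Definition norm2 (R : realType) (s : R -> R) : \bar R :=
  Lnorm (PX R) 2%:E (fun x => (s x)%:E).

Definition small_ball (R : realType) (l : nat) (beta0 kappa0 : R) : Prop :=
  forall (a0 : R) (b c : nat -> R),
    (beta0%:E <= PX R [set x | (kappa0%:E * norm2 (trig_elem l a0 b c)
                                 <= `|trig_elem l a0 b c x|%:E)%E])%E.

(* Main.v *)
Require Import Defs.
From HB Require Import structures.
From mathcomp Require Import all_boot all_order all_algebra.
From mathcomp Require Import all_classical all_reals all_analysis.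
From mathcomp Require Import ring lra measurable_realfun.
Import Order.TTheory GRing.Theory Num.Theory.
Local Open Scope ring_scope.

Module Aux.
Set Implicit Arguments. Unset Strict Implicit. Unset Printing Implicit Defensive.
Import numFieldNormedType.Exports.
Local Open Scope classical_set_scope.
Local Open Scope ring_scope.
Section main.
Variable R : realType.
Implicit Types x y z : R.
Local Notation mu := (@lebesgue_measure R).

Lemma sin_le_abs y : `|sin y| <= `|y|.
Proof.
wlog y0 : y / 0 <= y.
  move=> H; case: (leP 0 y) => [/H//|y0].
  by rewrite -normrN -sinN -(normrN y) H // oppr_ge0 ltW.
have [c _ h] := @MVT_segment R sin cos 0 y y0 (fun x _ => is_derive_sin x)
  (continuous_subspaceT (@continuous_sin R)).
move: h; rewrite sin0 !subr0 => ->.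
by rewrite normrM ler_piMl // cos_max.
Qed.

Lemma sin_ge z : 0 <= z <= pi -> z * cos z <= sin z.
Proof.
move=> /andP[z0 zpi].
have [c cin h] := @MVT_segment R sin cos 0 z z0 (fun x _ => is_derive_sin x)
  (continuous_subspaceT (@continuous_sin R)).
have /andP[c0 cz] : 0 <= c <= z by move: cin; rewrite in_itv.
move: h; rewrite sin0 !subr0 => ->.
rewrite mulrC ler_wpM2r //.
rewrite leNgt ltr_cos ?in_itv /= ?c0 ?z0 ?zpi ?(le_trans cz zpi) //.
by rewrite -leNgt.
Qed.

Lemma one_cos y : 1 - cos y = 2 * sin (y / 2) ^+ 2.
Proof.
have -> : y = (y / 2) *+ 2 by rewrite -mulr_natr divfK.
rewrite cos_mulr2n cos2sin2 -mulr_natr.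
rewrite (_ : y / 2 *+ 2 / 2 = y / 2); last by rewrite -mulr_natr mulfK.
ring.
Qed.

Lemma one_cos_le y : 1 - cos y <= y ^+ 2 / 2.
Proof.
rewrite one_cos.
have := sin_le_abs (y / 2) => h.
have h2 : sin (y / 2) ^+ 2 <= (y / 2) ^+ 2.
  by rewrite -real_normK ?num_real // -[(y/2)^+2]real_normK ?num_real // lerXn2r // ?nnegrE.
have -> : y ^+ 2 / 2 = 2 * (y / 2) ^+ 2 by field.
by rewrite ler_pM2l.
Qed.

Lemma cos_ge1 y : 1 - y ^+ 2 / 2 <= cos y.
Proof. have := one_cos_le y; lra. Qed.

Lemma one_cos_ge y : `|y| <= 1 -> y ^+ 2 / 3 <= 1 - cos y.
Proof.
move=> hy.
have pi2 := pi_ge2 R.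
rewrite -cos_norm -(real_normK (num_real y)).
set u := `|y| in hy *.
have u0 : 0 <= u by rewrite normr_ge0.
rewrite one_cos.
set z := u / 2.
have z0 : 0 <= z by rewrite divr_ge0.
have z12 : z <= 1 / 2 by rewrite ler_pM2r.
have hs : z * cos z <= sin z by apply: sin_ge; rewrite z0 /=; lra.
have hc := cos_ge1 z.
have hz2 : z ^+ 2 <= 1 / 4 by nra.
have h1 : z * (7 / 8) <= sin z by nra.
have h2 : (z * (7 / 8)) ^+ 2 <= sin z ^+ 2.
  by rewrite lerXn2r // ?nnegrE //; [nra | nra].
have -> : u = 2 * z by rewrite /z; field.
nra.
Qed.

Lemma one_cos_ge1 x : 1 <= `|x| <= pi -> 1 / 3 <= 1 - cos x.
Proof.
move=> /andP[h1 hx].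
have pi2 := pi_ge2 R.
have c1 : cos `|x| <= cos 1.
  rewrite leNgt ltr_cos ?in_itv /= ?normr_ge0 ?hx ?ler01 //; last by lra.
  by rewrite -leNgt.
have := @one_cos_ge 1; rewrite normr1 lexx => /(_ isT).
rewrite cos_norm in c1. lra.
Qed.

Definition G (n : nat) x : R := 1 + 2 * \sum_(1 <= k < n.+1) cos (k%:R * x).
Definition F (n : nat) x : R := n%:R + 2 * \sum_(1 <= k < n) (n%:R - k%:R) * cos (k%:R * x).

Lemma cosprod a b : 2 * cos a * cos b = cos (a + b) + cos (a - b) :> R.
Proof. rewrite cosD cosB; ring. Qed.

Lemma dirichlet n x : (1 - cos x) * G n x = cos (n%:R * x) - cos (n.+1%:R * x).
Proof.
elim: n => [|n IH].
  by rewrite /G big_geq // mulr0 addr0 mulr1 mul0r cos0 mul1r.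
have -> : G n.+1 x = G n x + 2 * cos (n.+1%:R * x).
  by rewrite /G big_nat_recr //=; ring.
rewrite mulrDr IH.
have e1 := cosprod x (n.+1%:R * x).
have h2 : x + n.+1%:R * x = n.+2%:R * x by rewrite -[n.+2]addn1 natrD mulrDl mul1r addrC.
have h3 : x - n.+1%:R * x = - (n%:R * x) by rewrite -[n.+1]addn1 natrD mulrDl mul1r; ring.
rewrite h2 h3 cosN in e1.
have e1' : cos x * (2 * cos (n.+1%:R * x)) = cos (n.+2%:R * x) + cos (n%:R * x) by rewrite -e1; ring.
rewrite mulrBl mul1r e1'; ring.
Qed.

Lemma Fsum n x : \sum_(1 <= k < n) (n%:R - k%:R) * cos (k%:R * x) =
  \sum_(1 <= k < n.+1) (n%:R - k%:R) * cos (k%:R * x) :> R.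
Proof.
case: n => [|n]; first by rewrite !big_geq.
by rewrite [in RHS]big_nat_recr //= subrr mul0r addr0.
Qed.

Lemma FS n x : F n.+1 x = F n x + G n x.
Proof.
rewrite /F /G (Fsum n).
have -> : \sum_(1 <= k < n.+1) (n.+1%:R - k%:R) * cos (k%:R * x) =
   \sum_(1 <= k < n.+1) ((n%:R - k%:R) * cos (k%:R * x) + cos (k%:R * x)) :> R.
  by apply: eq_bigr => k _; rewrite -[n.+1]addn1 natrD; ring.
rewrite big_split /= -[n.+1]addn1 natrD; ring.
Qed.

Lemma fejer n x : (1 - cos x) * F n x = 1 - cos (n%:R * x).
Proof.
elim: n => [|n IH].
  by rewrite /F big_geq // mul0r mulr0 addr0 mulr0 cos0 subrr.
by rewrite FS mulrDr IH dirichlet; ring.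
Qed.

Lemma G0 n : G n 0 = 2 * n%:R + 1.
Proof.
rewrite /G.
under eq_bigr do rewrite mulr0 cos0.
rewrite big_const_nat iter_addr_0 subn1 /=; ring.
Qed.

Lemma F0 n : F n 0 = n%:R ^+ 2.
Proof.
elim: n => [|n IH]; first by rewrite /F big_geq // mulr0 addr0 expr0n.
rewrite FS IH G0 -[n.+1]addn1 natrD; ring.
Qed.

Lemma sqrt2K : Num.sqrt 2 * Num.sqrt 2 = 2 :> R.
Proof. by rewrite -expr2 sqr_sqrtr. Qed.

Lemma trigF l x :
  trig_elem l (l.+1)%:R (fun k => Num.sqrt 2 * ((l.+1)%:R - k%:R)) (fun _ => 0) x
  = F l.+1 x.
Proof.
rewrite /trig_elem /F /phi eqxx mulr1; congr (_ + _).
rewrite big_distrr /=; apply: eq_big_nat => k /andP[k1 _].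
rewrite mul0r addr0.
have -> : (2 * k == 0)%N = false by case: k k1.
have -> : odd (2 * k) = false by rewrite oddM.
have -> : (2 * k)./2 = k by rewrite mul2n doubleK.
by rewrite mulrACA sqrt2K.
Qed.

Lemma PXE (A : set R) : PX R A = (\int[mu]_(x in A) (uniform_pdf (- pi) pi x)%:E)%E.
Proof. by []. Qed.

Lemma leb_itv (r : R) : 0 <= r -> mu `[(- r)%R, r]%classic = (r *+ 2)%:E.
Proof.
move=> r0; rewrite lebesgue_measure_itv /= lte_fin.
case: ltP => h; first by rewrite -EFinD opprK mulr2n.
have -> : r = 0 by move: h r0; rewrite -lerN2 opprK; lra.
by rewrite mul0rn.
Qed.

Lemma aux2 (p r : R) : 0 < p -> (p *+ 2)^-1 * (r *+ 2) = r / p.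
Proof. move=> p0; rewrite !mulr2n; field; by rewrite gt_eqF // gt_eqF // addr_gt0. Qed.

Lemma PX_itv_le (r : R) : 0 <= r -> (PX R `[(- r)%R, r]%classic <= (r / pi)%:E)%E.
Proof.
move=> r0; rewrite PXE.
have pi0 := pi_gt0 R.
apply: (@le_trans _ _ (\int[mu]_(x in `[(- r)%R, r]%classic) (cst ((pi *+ 2)^-1)%:E) x)%E).
  apply: ge0_le_integral => //.
  - by move=> x _; rewrite lee_fin uniform_pdf_ge0 // Npi_lt_pi.
  - by apply/measurable_EFinP; apply: measurable_funTS; exact: measurable_uniform_pdf.
  - move=> x _; rewrite lee_fin /uniform_pdf; case: ifP => _.
      by rewrite opprK mulr2n.
    by rewrite invr_ge0 mulrn_wge0 // ltW.
rewrite integral_cst //.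
change (((pi *+ 2)^-1)%:E * lebesgue_measure `[(- r)%R, r]%classic <= (r / pi)%:E)%E.
rewrite leb_itv //.
rewrite -EFinM.
Timeout 10 rewrite lee_fin.
by rewrite aux2 // ltW.

Qed.

Lemma PX_itv (r : R) : 0 <= r <= pi -> PX R `[(- r)%R, r]%classic = (r / pi)%:E.
Proof.
move=> /andP[r0 rpi]; rewrite PXE.
have pi0 := pi_gt0 R.
rewrite (eq_integral (cst ((pi *+ 2)^-1)%:E)); last first.
  move=> x; rewrite inE /= in_itv /= => /andP[h1 h2].
  rewrite /uniform_pdf.
  have -> : (- pi <= x <= pi) = true.
    by apply/andP; split; [apply: le_trans h1; rewrite lerN2 | apply: le_trans rpi].
  by rewrite opprK mulr2n.
rewrite integral_cst //.
change (((pi *+ 2)^-1)%:E * lebesgue_measure `[(- r)%R, r]%classic = (r / pi)%:E)%E.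
by rewrite leb_itv // -EFinM aux2.
Qed.
End main.

Section N.
Variable R : realType.
Implicit Types x y z : R.
Local Notation mu := (@lebesgue_measure R).

Lemma measF n : measurable_fun setT (@F R n).
Proof.
rewrite /F.
apply: measurable_funD; first exact: measurable_cst.
apply: measurable_funM; first exact: measurable_cst.
apply: measurable_sum => k.
apply: measurable_funM; first exact: measurable_cst.
apply: measurableT_comp; first exact: continuous_measurable_fun (@continuous_cos R).
apply: measurable_funM; first exact: measurable_cst.
exact: measurable_id.
Qed.

Lemma norm2_ge (s : R -> R) (a r : R) : measurable_fun setT s -> 0 <= a -> 0 <= r <= pi ->
  (forall x, - r <= x <= r -> a <= `|s x|) ->
  ((Num.sqrt (a ^+ 2 * (r / pi)))%:E <= norm2 s)%E.
Proof.
move=> ms a0 rr hs.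
have /andP[r0 rpi] := rr.
rewrite /norm2 unlock /=.
rewrite -powR12_sqrt; last by rewrite mulr_ge0 // ?sqr_ge0 // divr_ge0 // pi_ge0.
rewrite -poweR_EFin.
apply: gt0_ler_poweR; first by rewrite invr_ge0.
- by rewrite in_itv /= lee_fin leey mulr_ge0 // ?sqr_ge0 // divr_ge0 // pi_ge0.
- by rewrite in_itv /= leey andbT integral_ge0 // => x _; rewrite lee_fin powR_ge0.
have mI : measurable `[(- r)%R, r]%classic by [].
under eq_integral do rewrite powR_mulrn ?normr_ge0 //.
apply: (@le_trans _ _ (\int[PX R]_(x in `[(- r)%R, r]%classic) ((`|s x| ^+ 2)%:E))%E); first last.
  apply: ge0_subset_integral => //.
  - apply/measurable_EFinP; apply: measurable_funX; exact: measurableT_comp.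
apply: (@le_trans _ _ (\int[PX R]_(x in `[(- r)%R, r]%classic) (cst (a ^+ 2)%:E x))%E); first last.
  apply: ge0_le_integral => //.
  - by move=> x _; rewrite lee_fin sqr_ge0.
  - apply/measurable_EFinP; apply: measurable_funX; apply: measurable_funTS; exact: measurableT_comp.
  - move=> x; rewrite /= in_itv /= => hx.
    by rewrite lee_fin lerXn2r ?nnegrE ?normr_ge0 // hs.
by rewrite integral_cst // EFinM -(PX_itv rr).
Qed.

Lemma PX_out : PX R (~` `[(- pi)%R, pi]%classic) = 0%E.
Proof.
rewrite PXE (eq_integral (cst 0%E)); first by rewrite integral0.
move=> x; rewrite inE /= in_itv /= => /negP/negbTE h.
by rewrite /uniform_pdf h.
Qed.

Lemma PX_small (s : R -> R) (c : \bar R) (rho : R) : measurable_fun setT s -> 0 <= rho ->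
  (forall x, - pi <= x <= pi -> (c <= `|s x|%:E)%E -> `|x| <= rho) ->
  (PX R [set x | (c <= `|s x|%:E)%E] <= rho%:E)%E.
Proof.
move=> ms r0 H.
have mS : measurable [set x | (c <= `|s x|%:E)%E].
  rewrite -[X in measurable X]setTI; apply: measurable_lee => //.
  apply/measurable_EFinP; exact: measurableT_comp.
have mI : measurable `[(- rho)%R, rho]%classic by [].
have mJ : measurable (~` `[(- pi)%R, pi]%classic : set R).
  apply: measurableC. done.
apply: (@le_trans _ _ (PX R (`[(- rho)%R, rho]%classic `|` ~` `[(- pi)%R, pi]%classic))).
  apply: le_measure; rewrite ?inE //; first exact: measurableU.
  move=> x /= hx.
  case: (boolP (- pi <= x <= pi)) => hp; [left | right].
    by rewrite /= in_itv /= -ler_norml; apply: H.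
  by rewrite /= in_itv /=; apply/negP.
apply: (le_trans (measureU2 (PX R) mI mJ)).
rewrite [X in (_ + X)%E](_ : _ = 0%E); last first.
  change (PX R (~` `[(- pi)%R, pi]%classic) = 0%E); exact: PX_out.
rewrite adde0 (le_trans (PX_itv_le r0)) // lee_fin.
rewrite ler_pdivrMr ?pi_gt0 // ler_peMr //.
have := pi_ge2 R; lra.
Qed.

Lemma sqrt_le_of (x rho : R) : 0 <= rho -> x ^+ 2 <= rho ^+ 2 -> `|x| <= rho.
Proof.
move=> r0 h; rewrite -(ler_pXn2r (n:=2)) ?nnegrE ?normr_ge0 //.
by rewrite real_normK ?num_real.
Qed.

Lemma upper_pt n x t : 0 < t -> - pi <= x <= pi -> t <= `|F n x| ->
  `|x| <= pi * Num.sqrt (6 / t).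
Proof.
move=> t0 hx ht.
have pi2 := pi_ge2 R.
have hx' : `|x| <= pi by rewrite ler_norml.
have e := fejer n x.
have c1 : 0 <= 1 - cos x by rewrite subr_ge0 cos_le1.
have hb : `|F n x| * (1 - cos x) <= 2.
  rewrite mulrC -(ger0_norm c1) -normrM e.
  have := cos_le1 (n%:R * x); have := cos_geN1 (n%:R * x).
  move=> h1 h2; rewrite ger0_norm; lra.
have sq0 : 0 <= Num.sqrt (6 / t) by apply: sqrtr_ge0.
case: (leP `|x| 1) => h1.
  have h3 := one_cos_ge h1.
  have : t * (x ^+ 2 / 3) <= 2.
    apply: le_trans hb; apply: ler_pM => //; [by apply: ltW | by rewrite divr_ge0 ?sqr_ge0].
  move=> h4.
  have h5 : x ^+ 2 <= Num.sqrt (6 / t) ^+ 2.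
    rewrite sqr_sqrtr; last by rewrite divr_ge0 // ltW.
    rewrite ler_pdivlMr //; nra.
  apply: le_trans (sqrt_le_of sq0 h5) _.
  by rewrite ler_peMl //; lra.
have h3 : 1 / 3 <= 1 - cos x by apply: one_cos_ge1; rewrite (ltW h1) hx'.
have h4 : t * (1 / 3) <= 2.
  apply: le_trans hb; apply: ler_pM => //; try lra; by apply: ltW.
have h5 : 1 <= Num.sqrt (6 / t).
  have h6 : 1 <= 6 / t by rewrite ler_pdivlMr //; lra.
  have := @sqrt_le_of 1 _ sq0; rewrite normr1; apply.
  by rewrite expr1n sqr_sqrtr // divr_ge0 // ltW.
apply: (le_trans hx'); rewrite ler_peMr //; lra.
Qed.

Lemma lower_pt n x : (0 < n)%N -> `|x| <= 1 / n%:R -> 2 / 3 * n%:R ^+ 2 <= `|F n x|.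
Proof.
move=> n0 hx.
have M1 : 1 <= (n%:R : R) by rewrite ler1n.
have M0 : 0 < (n%:R : R) by lra.
case: (eqVneq x 0) => [->|x0].
  rewrite F0 ger0_norm ?sqr_ge0 //.
  have : 0 <= (n%:R : R) ^+ 2 by apply: sqr_ge0.
  lra.
have hx1 : `|x| <= 1.
  apply: le_trans hx _; rewrite ler_pdivrMr //; lra.
have hMx : `|n%:R * x| <= 1.
  by rewrite normrM (ger0_norm (ltW M0)) mulrC -ler_pdivlMr.
have e := fejer n x.
have l1 := one_cos_ge hx1.
have u1 := one_cos_le x.
have w1 := one_cos_ge hMx.
have x2 : 0 < x ^+ 2 by rewrite lt_def sqrf_eq0 x0 sqr_ge0.
set u := 1 - cos x in e l1 u1.
set w := 1 - cos (n%:R * x) in e w1.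
have u0 : 0 < u by apply: lt_le_trans l1; rewrite divr_gt0.
have hF : 2 / 3 * n%:R ^+ 2 <= F n x.
  rewrite -(ler_pM2l u0) e.
  apply: le_trans w1.
  rewrite exprMn.
  have : u * (2 / 3 * n%:R ^+ 2) <= x ^+ 2 / 2 * (2 / 3 * n%:R ^+ 2).
    by rewrite ler_pM2r // mulr_gt0 // exprn_gt0.
  move=> h; apply: le_trans h _.
  rewrite le_eqVlt; apply/orP; left; apply/eqP; by field.
apply: le_trans hF _; exact: ler_norm.
Qed.
End N.

Section M.
Variable R : realType.

Lemma powR4 (x y : R) : 0 <= x -> (x `^ y) ^+ 4 = x `^ (y * 4).
Proof. by move=> x0; rewrite -powR_mulrn ?powR_ge0 // -powRrM. Qed.

Lemma final (k M p b : R) : 0 < k -> 1 <= M -> 2 <= p -> p <= 4 -> 0 <= b ->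
  b <= p * Num.sqrt (6 / (k * Num.sqrt ((2 / 3 * M ^+ 2) ^+ 2 * (1 / M / p)))) ->
  b <= 30 * k `^ (- (1 / 2)) * (2 * M - 1) `^ (- (3 / 4)).
Proof.
move=> k0 M1 p2 p4 b0.
have M0 : 0 < M by lra.
have p0 : 0 < p by lra.
set N2 := (2 / 3 * M ^+ 2) ^+ 2 * (1 / M / p).
have eN2 : N2 = 4 / 9 * M ^+ 3 / p.
  by rewrite /N2; field; rewrite !gt_eqF.
have N20 : 0 < N2 by rewrite eN2 divr_gt0 // mulr_gt0 // exprn_gt0.
set N := Num.sqrt N2.
have N0 : 0 < N by rewrite sqrtr_gt0.
have NN : N ^+ 2 = N2 by rewrite sqr_sqrtr // ltW.
set t := k * N.
have t0 : 0 < t by rewrite mulr_gt0.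
set rho := Num.sqrt (6 / t).
have rho0 : 0 <= rho by apply: sqrtr_ge0.
have rr : rho ^+ 2 = 6 / t by rewrite sqr_sqrtr // divr_ge0 // ltW.
move=> hb.
set D := 2 * M - 1.
have D0 : 0 < D by rewrite /D; lra.
have T0 : 0 <= 30 * k `^ (- (1 / 2)) * D `^ (- (3 / 4)).
  by rewrite mulr_ge0 ?powR_ge0 // mulr_ge0 ?powR_ge0.
rewrite -(ler_pXn2r (n := 4)) ?nnegrE //.
apply: (le_trans (lerXn2r 4 _ _ hb)); rewrite ?nnegrE //.
  by rewrite mulr_ge0 // ltW.

rewrite !exprMn !powR4 ?(ltW k0) ?(ltW D0) //.
have -> : - (1 / 2) * 4 = - 2%:R :> R by field.
have -> : - (3 / 4) * 4 = - 3%:R :> R by field.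
rewrite !powR_invn ?(ltW k0) ?(ltW D0) //.
have -> : rho ^+ 4 = (rho ^+ 2) ^+ 2 by rewrite -exprM.
rewrite rr /t.
have k2 : 0 < k ^+ 2 by rewrite exprn_gt0.
have M3 : 0 < M ^+ 3 by rewrite exprn_gt0.
have D3 : 0 < D ^+ 3 by rewrite exprn_gt0.
have e : p ^+ 4 * (6 / (k * N)) ^+ 2 = (81 * p ^+ 5 / M ^+ 3) / k ^+ 2.
  rewrite expr_div_n exprMn NN eN2; field.
  by rewrite !gt_eqF.
rewrite e [X in _ <= X]mulrAC ler_pM2r ?invr_gt0 //.
rewrite ler_pdivrMr // mulrAC ler_pdivlMr //.
have h1 : p ^+ 5 <= 4 ^+ 5 by rewrite lerXn2r ?nnegrE // ltW.
have h2 : D ^+ 3 <= (2 * M) ^+ 3 by rewrite lerXn2r ?nnegrE /D; lra.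
rewrite exprMn in h2.
have h3 : 81 * p ^+ 5 * D ^+ 3 <= 81 * 4 ^+ 5 * (2 ^+ 3 * M ^+ 3).
  apply: ler_pM; rewrite ?mulr_ge0 ?exprn_ge0 ?(ltW p0) ?(ltW D0) //.
  by rewrite ler_pM2l.
apply: (le_trans h3).
have : 0 <= M ^+ 3 by apply: ltW.
lra.
Qed.
End M.


End Aux.
Import Aux.

Theorem proposition2 (R : realType) :
  exists C : R, 0 < C /\
    forall (l : nat) (beta0 kappa0 : R),
      0 < beta0 -> 0 < kappa0 -> small_ball l beta0 kappa0 ->
      beta0 <= C * powR kappa0 (- (1/2)) * powR ((2 * l + 1)%:R) (- (3/4)).
Proof.
exists 30; split => // l b k b0 k0 hsb.
set n := l.+1.
set M : R := n%:R.
have M1 : 1 <= M by rewrite /M ler1n.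
have M0 : 0 < M by lra.
have pi2 := pi_ge2 R.
have pi4 : pi <= 4 :> R by have := pihalf_lt2 R; lra.
have := hsb M (fun k => Num.sqrt 2 * (M - k%:R)) (fun _ => 0).
have -> : trig_elem l M (fun k => Num.sqrt 2 * (M - k%:R)) (fun _ => 0) = F n.
  by apply/funext => x; rewrite trigF.
move=> hP.
set a := 2 / 3 * M ^+ 2.
set r := 1 / M.
have r0 : 0 <= r by rewrite /r divr_ge0 // ltW.
have rpi : r <= pi by rewrite /r ler_pdivrMr //; nra.
have a0 : 0 <= a by rewrite /a mulr_ge0 // sqr_ge0.
have hN : ((Num.sqrt (a ^+ 2 * (r / pi)))%:E <= norm2 (F n))%E.
  apply: norm2_ge => //; first exact: measF.
    by rewrite r0 rpi.
  move=> x hx; apply: lower_pt => //.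
  by rewrite ler_norml.
set N := Num.sqrt (a ^+ 2 * (r / pi)).
have N0 : 0 < N.
  rewrite sqrtr_gt0 mulr_gt0 // ?exprn_gt0 ?divr_gt0 ?pi_gt0 //.
  by rewrite /a mulr_gt0 // exprn_gt0.
set t := k * N.
have t0 : 0 < t by rewrite mulr_gt0.
have hS := @PX_small R (F n) (k%:E * norm2 (F n))%E (pi * Num.sqrt (6 / t)) (measF n).
have rho0 : 0 <= pi * Num.sqrt (6 / t) by rewrite mulr_ge0 ?pi_ge0 ?sqrtr_ge0.
have hpt : forall x, - pi <= x <= pi -> (k%:E * norm2 (F n) <= `|F n x|%:E)%E ->
    `|x| <= pi * Num.sqrt (6 / t).
  move=> x hx hc; apply: upper_pt => //.
  rewrite -lee_fin; apply: le_trans hc.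
  by rewrite EFinM lee_wpmul2l // lee_fin ltW.
have := le_trans hP (hS rho0 hpt); rewrite lee_fin => hb.
have -> : ((2 * l + 1)%:R : R) = 2 * M - 1.
  rewrite /M /n -[l.+1]addn1 !natrD; ring.
apply: (final k0 M1 pi2 pi4 (ltW b0)).
exact: hb.
Qed.
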